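(* Let $P\subset\mathbb{R}^d$ be a finite point set whose minimum pairwise distance is $1$, and let $G$ be the final graph of the uncoordinated construction (described in the context) on $P$ with parameter $s>1$. Then for any two points $p,q\in P$ there is a path in $G$ between $p$ and $q$ of Euclidean length at most $\frac{s+1}{s-1}|pq|$ using at most $2|pq|^{1/(1+\lg s)}$ edges.
   Context: Fix $d\ge 1$; $|xy|$ is Euclidean distance; $\lg$ is logarithm base 2. Uncoordinated construction: start with the graph $G$ on vertex set $P$ with no edges. Every ordered pair $(p,q)$ of distinct points of $P$ is processed exactly once, in an arbitrary order, one at a time. When $(p,q)$ is processed, the edge $pq$ is added to $G$ unless $G$ currently contains an edge whose endpoints can be labeled $p',q'$ with $|pp'|\le |p'q'|/(2s+2)$ and $|qq'|\le |p'q'|/(2s+2)$. $G$ is the graph after all pairs are processed. *)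

(* Defs.v *)
From HB Require Import structures.
From mathcomp Require Import all_boot all_order all_algebra.
From mathcomp Require Import all_classical all_reals.
From mathcomp Require Import exp.
Set Implicit Arguments. Unset Strict Implicit. Unset Printing Implicit Defensive.
Import Order.TTheory GRing.Theory Num.Theory.
Local Open Scope ring_scope.

Section Defs.
Variables (R : realType) (d : nat).

Definition ptR := 'rV[R]_d.

Definition edist (x y : ptR) : R :=
  Num.sqrt (\sum_(i < d) (x ord0 i - y ord0 i) ^+ 2).

Definition lg (x : R) : R := ln x / ln 2.

Definition ordered_pairs (P : seq ptR) : seq (ptR * ptR) :=
  [seq (p, q) | p <- P, q <- [seq q <- P | p != q]].

Definition blocks (s : R) (p q : ptR) (e : ptR * ptR) : bool :=
  let close := fun p' q' =>
    (edist p p' <= edist p' q' / (2 * s + 2)) &&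
    (edist q q' <= edist p' q' / (2 * s + 2)) in
  close e.1 e.2 || close e.2 e.1.

Definition process (s : R) (G : seq (ptR * ptR)) (pq : ptR * ptR)
  : seq (ptR * ptR) :=
  if has (blocks s pq.1 pq.2) G then G else rcons G pq.

Definition uncoordinated (s : R) (order : seq (ptR * ptR))
  : seq (ptR * ptR) := foldl (process s) [::] order.

Definition adj (G : seq (ptR * ptR)) : rel ptR :=
  fun u v => ((u, v) \in G) || ((v, u) \in G).

Definition walk_length (x : ptR) (w : seq ptR) : R :=
  \sum_(e <- zip (x :: w) w) edist e.1 e.2.

End Defs.

(* Main.v *)
Require Import Defs.
From HB Require Import structures.
From mathcomp Require Import all_boot all_order all_algebra.
From mathcomp Require Import all_classical all_reals.
From mathcomp Require Import exp.
From mathcomp Require Import ring lra.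
Set Implicit Arguments. Unset Strict Implicit. Unset Printing Implicit Defensive.
Import Order.TTheory GRing.Theory Num.Theory.
Local Open Scope ring_scope.

Section Metric.
Variables (R : realType) (d : nat).
Implicit Types x y z : ptR R d.

Lemma edist_ge0 x y : 0 <= edist x y.
Proof. exact: sqrtr_ge0. Qed.

Lemma edistxx x : edist x x = 0.
Proof. by rewrite /edist big1 ?sqrtr0 // => i _; rewrite subrr expr2 mulr0. Qed.

Lemma edistC x y : edist x y = edist y x.
Proof. by rewrite /edist; congr Num.sqrt; apply: eq_bigr => i _; rewrite -sqrrN opprB. Qed.

Lemma sumsq0 (u : 'I_d -> R) : \sum_(i < d) u i ^+ 2 = 0 -> forall i, u i = 0.
Proof.
move=> h i; have /psumr_eq0P H : forall j : 'I_d, true -> 0 <= u j ^+ 2 by move=> j _; exact: sqr_ge0.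
by move: (H h i isT) => /eqP; rewrite sqrf_eq0 => /eqP.
Qed.

Lemma cauchy_schwarz (u v : 'I_d -> R) :
  \sum_(i < d) u i * v i <=
  Num.sqrt (\sum_(i < d) u i ^+ 2) * Num.sqrt (\sum_(i < d) v i ^+ 2).
Proof.
set A := \sum_(i < d) u i ^+ 2; set B := \sum_(i < d) v i ^+ 2.
set C := \sum_(i < d) u i * v i.
have A0 : 0 <= A by apply: sumr_ge0 => i _; exact: sqr_ge0.
have B0 : 0 <= B by apply: sumr_ge0 => i _; exact: sqr_ge0.
set a := Num.sqrt A; set b := Num.sqrt B.
have a0 : 0 <= a by exact: sqrtr_ge0.
have b0 : 0 <= b by exact: sqrtr_ge0.
have aA : a ^+ 2 = A by rewrite sqr_sqrtr.
have bB : b ^+ 2 = B by rewrite sqr_sqrtr.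
have key : 0 <= \sum_(i < d) (b * u i - a * v i) ^+ 2 by apply: sumr_ge0 => i _; exact: sqr_ge0.
have E : \sum_(i < d) (b * u i - a * v i) ^+ 2 = b ^+ 2 * A - 2 * a * b * C + a ^+ 2 * B.
  rewrite (eq_bigr (fun i => b ^+ 2 * u i ^+ 2 - 2 * a * b * (u i * v i) + a ^+ 2 * v i ^+ 2)); last by move=> i _; ring.
  by rewrite big_split sumrB /= /A /B /C !mulr_sumr.
have abC : a * b * C <= (a * b) ^+ 2.
  move: key; rewrite E aA bB; nra.
have [ab0|abp] := eqVneq (a * b) 0.
  move: ab0 => /eqP; rewrite mulf_eq0 => /orP[] /eqP h.
  - have : A = 0 by rewrite -aA h expr2 mul0r.
    move/sumsq0 => hu; rewrite /C big1 ?h ?mul0r // => i _; by rewrite hu mul0r.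
  - have : B = 0 by rewrite -bB h expr2 mul0r.
    move/sumsq0 => hv; rewrite /C big1 ?h ?mulr0 // => i _; by rewrite hv mulr0.
have abpos : 0 < a * b by rewrite lt_def abp mulr_ge0.
by rewrite expr2 ler_pM2l // in abC.
Qed.

Lemma edist_triangle x y z : edist x z <= edist x y + edist y z.
Proof.
rewrite /edist.
set u := fun i => x ord0 i - y ord0 i; set v := fun i => y ord0 i - z ord0 i.
have CS := cauchy_schwarz u v.
set a := Num.sqrt _ in CS; set b := Num.sqrt _ in CS.
have a0 : 0 <= a by exact: sqrtr_ge0.
have b0 : 0 <= b by exact: sqrtr_ge0.
rewrite -[a + b]ger0_norm ?addr_ge0 // -sqrtr_sqr ler_sqrt ?sqr_ge0 //.
have -> : \sum_(i < d) (x ord0 i - z ord0 i) ^+ 2 =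
  \sum_(i < d) u i ^+ 2 + 2 * \sum_(i < d) u i * v i + \sum_(i < d) v i ^+ 2.
  rewrite mulr_sumr -!big_split /=; apply: eq_bigr => i _; rewrite /u /v; ring.
have aA : a ^+ 2 = \sum_(i < d) u i ^+ 2 by rewrite sqr_sqrtr // sumr_ge0 // => i _; exact: sqr_ge0.
have bB : b ^+ 2 = \sum_(i < d) v i ^+ 2 by rewrite sqr_sqrtr // sumr_ge0 // => i _; exact: sqr_ge0.
rewrite -aA -bB; nra.
Qed.
End Metric.

Lemma count_lt (T : Type) (a1 a2 : pred T) (s : seq T) :
  subpred a1 a2 -> has (fun x => a2 x && ~~ a1 x) s -> (count a1 s < count a2 s)%N.
Proof.
move=> sub; elim: s => //= x s IH /orP[/andP[h2 h1]|h].
  rewrite h2 (negbTE h1) /= add0n add1n ltnS; exact: sub_count.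
have := IH h; case h1: (a1 x); first by rewrite (sub x h1) !add1n ltnS.
by case: (a2 x) => /= H; rewrite ?add0n ?add1n // ltnW.
Qed.


Section Graph.
Variables (R : realType) (d : nat) (s : R).
Local Notation T := (ptR R d).
Implicit Types (G : seq (T * T)) (x : T * T).

Definition good G x := adj G x.1 x.2 || has (blocks s x.1 x.2) G.

Lemma good_mono G G' x : {subset G <= G'} -> good G x -> good G' x.
Proof.
move=> sub /orP[/orP[h|h]|/hasP[e eG he]]; rewrite /good /adj.
- by rewrite (sub _ h).
- by rewrite (sub _ h) orbT.
- by apply/orP; right; apply/hasP; exists e => //; exact: sub.
Qed.

Lemma process_sub G x : {subset G <= process s G x}.
Proof. by rewrite /process; case: ifP => _ e h //; rewrite mem_rcons inE h orbT. Qed.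

Lemma process_good G x : good (process s G x) x.
Proof.
rewrite /process /good; case: ifP => [->|_]; first by rewrite orbT.
by rewrite /adj mem_rcons inE -surjective_pairing eqxx.
Qed.

Lemma foldl_sub G0 o : {subset G0 <= foldl (process s) G0 o}.
Proof.
elim: o G0 => [|x o IH] G0 e h //=; apply: IH; exact: process_sub.
Qed.

Lemma foldl_good G0 o x : x \in o -> good (foldl (process s) G0 o) x.
Proof.
elim: o G0 => //= y o IH G0; rewrite inE => /orP[/eqP->|h]; last exact: IH.
apply: good_mono (process_good _ _); exact: foldl_sub.
Qed.

Lemma foldl_edges G0 o e : e \in foldl (process s) G0 o -> e \in G0 ++ o.
Proof.
elim: o G0 => [|y o IH] G0 /=; first by rewrite cats0.
move/IH; rewrite !mem_cat !inE /process; case: ifP => _.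
  by case/orP=> ->; rewrite ?orbT.
by rewrite mem_rcons inE; case/orP=> [/orP[->|->]|->]; rewrite ?orbT.
Qed.

Lemma mem_ordered_pairs (P : seq T) (p q : T) :
  ((p, q) \in ordered_pairs P) = [&& p \in P, q \in P & p != q].
Proof.
apply/allpairsPdep/and3P.
  by case=> x [y [hx]]; rewrite mem_filter => /andP[hxy hy] [-> ->].
by case=> hp hq hpq; exists p, q; rewrite mem_filter hpq hq.
Qed.

End Graph.

Lemma walk_nil (R : realType) (d : nat) (x : ptR R d) : walk_length x [::] = 0.
Proof. by rewrite /walk_length big_nil. Qed.

Lemma walk_cons (R : realType) (d : nat) (x y : ptR R d) w :
  walk_length x (y :: w) = edist x y + walk_length y w.
Proof. by rewrite /walk_length /= big_cons. Qed.

Lemma walk_cat (R : realType) (d : nat) (x : ptR R d) w1 w2 :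
  walk_length x (w1 ++ w2) = walk_length x w1 + walk_length (last x w1) w2.
Proof.
elim: w1 x => [|y w1 IH] x /=; first by rewrite walk_nil add0r.
by rewrite !walk_cons IH addrA.
Qed.

Lemma pow2s (R : realType) (s : R) : 1 < s -> powR (2 * s) (1 / (1 + lg s)) = 2.
Proof.
move=> hs.
have s0 : 0 < s by apply: lt_trans hs.
have h2 : 0 < ln (2 : R) by apply: ln_gt0; rewrite ltr1n.
have hl : 0 < ln s by apply: ln_gt0.
rewrite /powR gt_eqF ?mulr_gt0 // lnM ?posrE //.
have -> : 1 / (1 + lg s) * (ln 2 + ln s) = ln (2 : R).
  rewrite /lg; field; apply/andP; split; first by rewrite gt_eqF.
  rewrite gt_eqF //; apply: addr_gt0 => //; exact: ltr01.
by rewrite lnK // posrE.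
Qed.

Lemma arith1 (R : realType) (s A B C D : R) : 1 < s -> 1 <= D -> 0 <= A -> 0 <= B ->
  A <= C / (2 * s + 2) -> B <= C / (2 * s + 2) -> C <= A + D + B ->
  [/\ A <= D / (2 * s), B <= D / (2 * s), A < D, B < D & 0 <= D / (2 * s)].
Proof.
move=> hs D1 A0 B0 hA hB tri.
have s2 : 0 < 2 * s + 2 by lra.
have s0 : 0 < 2 * s by lra.
rewrite ler_pdivlMr // in hA; rewrite ler_pdivlMr // in hB.
have AD : A * (2 * s) <= D by nra.
have BD : B * (2 * s) <= D by nra.
split; rewrite ?ler_pdivlMr //; try nra.
Qed.

Lemma arith2 (R : realType) (s A B C D L1 L2 : R) : 1 < s -> 0 <= A -> 0 <= B ->
  A <= C / (2 * s + 2) -> B <= C / (2 * s + 2) -> C <= A + D + B ->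
  L1 <= (s + 1) / (s - 1) * A -> L2 <= (s + 1) / (s - 1) * B ->
  L1 + (C + L2) <= (s + 1) / (s - 1) * D.
Proof.
move=> hs A0 B0 hA hB tri h1 h2.
have s2 : 0 < 2 * s + 2 by lra.
rewrite ler_pdivlMr // in hA; rewrite ler_pdivlMr // in hB.
have key : (s + 1) * (A + B) + (s - 1) * C <= (s + 1) * D by nra.
set t := (s + 1) / (s - 1) in h1 h2 *.
have ht : t * (s - 1) = s + 1 by rewrite /t; field; rewrite subr_eq0 gt_eqF.
have t0 : 0 < t by rewrite /t divr_gt0 //; lra.
have : 0 <= (s - 1) * (t * D - t * A - t * B - C).
  have -> : (s - 1) * (t * D - t * A - t * B - C) = (t * (s - 1)) * (D - A - B) - (s - 1) * C by ring.
  rewrite ht; lra.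
rewrite pmulr_rge0; last by lra.
lra.
Qed.

Lemma arith3 (R : realType) (n1 n2 X Y Q Z : R) :
  n1 = 0 \/ n1 <= 2 * X - 1 -> n2 = 0 \/ n2 <= 2 * Y - 1 ->
  X <= Q -> Y <= Q -> Z = Q * 2 -> 1 <= Z -> n1 + (n2 + 1) <= 2 * Z - 1.
Proof. by move=> [->|h1] [->|h2] hX hY -> hZ; lra. Qed.

Lemma arith4 (R : realType) (t D : R) : 1 <= t -> 0 <= D -> D <= t * D.
Proof. move=> h1 h2; nra. Qed.

Lemma arith5 (R : realType) (Z : R) : 1 <= Z -> 1 <= 2 * Z - 1.
Proof. move=> h; lra. Qed.

Section Main.
Variables (R : realType) (d : nat) (s : R) (P : seq (ptR R d))
  (F : seq (ptR R d * ptR R d)).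
Hypothesis hs : 1 < s.
Hypothesis hmin : forall p q, p \in P -> q \in P -> p != q -> 1 <= edist p q.
Hypothesis hgood : forall p q, p \in P -> q \in P -> p != q -> good s F (p, q).
Hypothesis hedge : forall e, e \in F -> (e.1 \in P) && (e.2 \in P).

Definition meas (p q : ptR R d) :=
  count (fun e : ptR R d * ptR R d => edist e.1 e.2 < edist p q)
    [seq (x, y) | x <- P, y <- P].

Lemma meas_lt p q x y : x \in P -> y \in P -> edist x y < edist p q ->
  (meas x y < meas p q)%N.
Proof.
move=> hx hy H; apply: count_lt.
  by move=> e /= h; exact: lt_trans h H.
apply/hasP; exists (x, y); first exact: allpairs_f.
by rewrite /= H ltxx.
Qed.

Let al := 1 / (1 + lg s).
Let t := (s + 1) / (s - 1).

Lemma al_gt0 : 0 < al.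
Proof.
have h2 : 0 < ln (2 : R) by apply: ln_gt0; rewrite ltr1n.
have hl : 0 < ln s by apply: ln_gt0.
rewrite /al /lg divr_gt0 // addr_gt0 // divr_gt0 //.
Qed.

Lemma t_ge1 : 1 <= t.
Proof.
rewrite /t ler_pdivlMr ?subr_gt0 // mul1r; lra.
Qed.

Lemma powD_ge1 D : 1 <= D -> 1 <= powR D al.
Proof.
move=> D1; have := @ge0_ler_powR R al (ltW al_gt0) 1 D.
rewrite powR1; apply => //; rewrite nnegrE //; lra.
Qed.

Lemma main n : forall p q, p \in P -> q \in P -> (meas p q < n)%N ->
  exists w, [/\ path (adj F) p w, last p w = q,
     walk_length p w <= t * edist p q &
     w = [::] \/ (size w)%:R <= 2 * powR (edist p q) al - 1].
Proof.
elim: n => // n IH p q hp hq hm.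
have hs' : 1 < s by exact: hs.
have [<-|pq] := eqVneq p q.
  exists [::]; split => //; last by left.
  by rewrite walk_nil edistxx mulr0.
have D1 : 1 <= edist p q := hmin hp hq pq.
have Z1 := powD_ge1 D1.
have sub : forall x y, x \in P -> y \in P -> edist x y < edist p q ->
  exists w, [/\ path (adj F) x w, last x w = y,
     walk_length x w <= t * edist x y &
     w = [::] \/ (size w)%:R <= 2 * powR (edist x y) al - 1].
  move=> x y hx hy hxy; apply: IH => //.
  by apply: leq_trans (meas_lt hx hy hxy) _; rewrite -ltnS.
have step : forall p' q', adj F p' q' -> p' \in P -> q' \in P ->
    edist p p' <= edist p' q' / (2 * s + 2) ->
    edist q q' <= edist p' q' / (2 * s + 2) ->
  exists w, [/\ path (adj F) p w, last p w = q,
     walk_length p w <= t * edist p q &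
     w = [::] \/ (size w)%:R <= 2 * powR (edist p q) al - 1].
  move=> p' q' hadj hp' hq' hA hB.
  set D := edist p q in D1 Z1 *.
  set A := edist p p' in hA *; set B := edist q q' in hB *.
  set C := edist p' q' in hA hB.
  have A0 : 0 <= A := edist_ge0 _ _.
  have B0 : 0 <= B := edist_ge0 _ _.
  have tri : C <= A + D + B.
    apply: (le_trans (edist_triangle p' p q')).
    rewrite edistC -/A -addrA lerD2l; apply: (le_trans (edist_triangle p q q')).
    by rewrite -/D -/B.
  have s0 : 0 < 2 * s by rewrite mulr_gt0 // (lt_trans ltr01 hs').
  have [AD BD AltD BltD' D20] := arith1 hs' D1 A0 B0 hA hB tri.
  have BltD : edist q' q < D by rewrite edistC -/B.
  have [w1 [pw1 lw1 Lw1 Sw1]] := sub p p' hp hp' AltD.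
  have [w2 [pw2 lw2 Lw2 Sw2]] := sub q' q hq' hq BltD.
  rewrite edistC -/B in Lw2 Sw2; rewrite -/A in Lw1 Sw1.
  exists (w1 ++ q' :: w2); split.
  - by rewrite cat_path pw1 lw1 /=; apply/andP; split.
  - by rewrite last_cat lw1 /= lw2.
  - rewrite walk_cat lw1 walk_cons -/C.
    exact: (arith2 hs' A0 B0 hA hB tri Lw1 Lw2).
  - right.
    have hZ : powR D al = powR (D / (2 * s)) al * 2.
      have -> : powR (D / (2 * s)) al * 2 = powR (D / (2 * s)) al * powR (2 * s) al by rewrite pow2s.
      by rewrite -powRM ?mulfVK ?gt_eqF // ltW.
    have X : powR A al <= powR (D / (2 * s)) al.
      apply: ge0_ler_powR; rewrite ?nnegrE //; exact: ltW al_gt0.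
    have Y : powR B al <= powR (D / (2 * s)) al.
      apply: ge0_ler_powR; rewrite ?nnegrE //; exact: ltW al_gt0.
    rewrite size_cat /= -addn1 !natrD.
    apply: (arith3 _ _ X Y hZ Z1).
    + by case: Sw1 => [->|]; [left|right].
    + by case: Sw2 => [->|]; [left|right].
have := hgood hp hq pq; rewrite /good /= => /orP[hadj | /hasP[[a b] hab hbl]].
  exists [:: q]; split => /=; first by rewrite hadj.
  - by [].
  - rewrite walk_cons walk_nil addr0; exact: (arith4 t_ge1 (edist_ge0 p q)).
  - by right; rewrite mulr1n; exact: arith5.
have /andP[ha hb] := hedge hab.
rewrite /blocks /= in hbl; case/orP: hbl => /andP[h1 h2].
  by apply: (step a b) => //; rewrite /adj hab.
by apply: (step b a) => //; rewrite /adj hab orbT.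
Qed.

End Main.

Theorem theorem12 (R : realType) (d : nat) (hd : (1 <= d)%N)
  (P : seq (ptR R d)) (huniq : uniq P)
  (hmin : forall p q, p \in P -> q \in P -> p != q -> 1 <= edist p q)
  (hattain : exists p q, [/\ p \in P, q \in P, p != q & edist p q = 1])
  (s : R) (hs : 1 < s)
  (order : seq (ptR R d * ptR R d))
  (horder : perm_eq order (ordered_pairs P)) :
  let G := uncoordinated s order in
  forall p q, p \in P -> q \in P ->
  exists w : seq (ptR R d),
    [/\ path (adj G) p w, last p w = q,
        walk_length p w <= (s + 1) / (s - 1) * edist p q
      & (size w)%:R <= 2 * powR (edist p q) (1 / (1 + lg s))].
Proof.
move=> G p q hp hq.
have hgood : forall p q, p \in P -> q \in P -> p != q -> good s G (p, q).
  move=> x y hx hy hxy; apply: foldl_good.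
  by rewrite (perm_mem horder) mem_ordered_pairs hx hy hxy.
have hedge : forall e, e \in G -> (e.1 \in P) && (e.2 \in P).
  move=> e /foldl_edges; rewrite cat0s (perm_mem horder) [e]surjective_pairing.
  by rewrite mem_ordered_pairs => /and3P[-> ->].
have [w [h1 h2 h3 h4]] := main hs hmin hgood hedge hp hq (ltnSn (meas P p q)).
exists w; split => //.
case: h4 => [->|h4]; first by rewrite mulr_ge0 ?powR_ge0.
by apply: le_trans h4 _; rewrite lerBlDr lerDl.
Qed.
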